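(* Let $\delta\in(0,1)$ and $c_2(\delta,d):=\mathbb{E}_{\mathbf{x}\sim U^d}[\mathbf{x}[2]^2\mid\mathbf{x}[1]\ge\delta]$. Then $$c_2(\delta,d)\ge\frac{1}{3d}\left(\frac34-\frac12\delta-\frac14\delta^2\right)^3.$$
   Context: $U^d$ denotes the uniform distribution over the $d$-dimensional unit sphere; $\mathbf{x}[i]$ is the $i$-th coordinate of $\mathbf{x}$. *)

(* Defs.v *)
From HB Require Import structures.
From mathcomp Require Import all_boot all_order all_algebra.
From mathcomp Require Import all_classical all_reals all_analysis.
Set Implicit Arguments. Unset Strict Implicit. Unset Printing Implicit Defensive.
Import Order.TTheory GRing.Theory Num.Theory.
Local Open Scope classical_set_scope.
Local Open Scope ring_scope.

(* Points of R^d are represented as d-tuples of reals, with the product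
   (= Borel) sigma-algebra provided by mathcomp-analysis. *)

Definition unit_sphere (R : realType) (d : nat) : set (d.-tuple R) :=
  [set x | \sum_(i < d) (tnth x i) ^+ 2 = 1].

Definition tmap (R : realType) (d : nat) (Q : 'M[R]_d) (x : d.-tuple R)
  : d.-tuple R :=
  [tuple (((\row_(j < d) tnth x j) *m Q) 0 i) | i < d].

(* P is the uniform distribution U^d on the unit sphere: the (unique)
   probability measure on R^d concentrated on the unit sphere and invariant
   under every orthogonal transformation. *)
Definition is_uniform_sphere (R : realType) (d : nat)
  (P : probability (d.-tuple R) R) : Prop :=
  P (@unit_sphere R d) = 1%E /\
  forall Q : 'M[R]_d, Q *m Q^T = 1%:M ->
    forall A : set (d.-tuple R), measurable A ->
      P (tmap Q @^-1` A) = P A.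

(* c_2(delta,d) = E_{x ~ U^d}[ x[2]^2 | x[1] >= delta ]
   = E[x[2]^2 1{x[1] >= delta}] / P(x[1] >= delta)
   (coordinates are 1-indexed in the paper, 0-indexed here). *)
Definition c2 (R : realType) (d : nat) (P : probability (d.-tuple R) R)
  (delta : R) : R :=
  fine (\int[P]_(x in [set x : d.-tuple R | delta <= nth 0 x 0])
          ((nth 0 x 1) ^+ 2)%:E)
  / fine (P [set x : d.-tuple R | delta <= nth 0 x 0]).

(* Main.v *)
Require Import Defs.
From HB Require Import structures.
From mathcomp Require Import all_boot all_order all_algebra perm fingroup.
From mathcomp Require Import all_classical all_reals all_analysis.
From mathcomp Require Import measurable_realfun.
From mathcomp Require Import ring lra.
Import Order.TTheory GRing.Theory Num.Theory.
Local Open Scope classical_set_scope.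
Local Open Scope ring_scope.

Section G.
Variable R : realFieldType.

Lemma geo_disj (de c s x0 y b : R) : 0 < de < 1 -> c ^+ 2 = (1 + de) / 2 ->
  s ^+ 2 = (5 + 3 * de) / 8 -> 0 <= c -> 0 <= s -> x0 ^+ 2 + y ^+ 2 <= 1 ->
  s <= c * x0 + b * y -> s <= c * x0 - b * y -> False.
Proof.
move=> /andP [d0 d1] hc hs c0 s0 hxy h1 h2.
have cs : c < s.
  have : c ^+ 2 < s ^+ 2 by rewrite hc hs; lra.
  by rewrite ltr_pXn2r // ?nnegrE.
have cpos : 0 < c.
  rewrite lt_def c0 andbT; apply/eqP => c00; move: hc; rewrite c00 expr2 mul0r; lra.
have hc1 : c * 1 < c * x0 by rewrite mulr1; lra.
have x1 : 1 < x0 by rewrite -(ltr_pM2l cpos).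
nra.
Qed.

Lemma geo_cont (de c sg s x0 y : R) : 0 < de < 1 -> c ^+ 2 = (1 + de) / 2 ->
  sg ^+ 2 = (1 - de) / 2 ->
  s ^+ 2 = (5 + 3 * de) / 8 -> 0 <= c -> 0 <= sg -> 0 <= s ->
  x0 ^+ 2 + y ^+ 2 <= 1 ->
  s <= c * x0 + sg * y -> de <= x0.
Proof.
move=> /andP [d0 d1] hc hsg hs c0 sg0 s0 hxy h1.
rewrite leNgt; apply/negP => hx.
have cpos : 0 < c.
  rewrite lt_def c0 andbT; apply/eqP => c00; move: hc; rewrite c00 expr2 mul0r; lra.
have sde : c * de < s.
  have : (c * de) ^+ 2 < s ^+ 2.
    rewrite exprMn hc hs.
    have : 0 < (1 - de) * (5 + 8 * de + 4 * de ^+ 2) by apply: mulr_gt0; nra.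
    nra.
  rewrite ltr_pXn2r // ?nnegrE //; apply: mulr_ge0 => //; lra.
have cx : c * x0 < c * de by rewrite ltr_pM2l.
have pos : 0 < s - c * x0 by lra.
have h2 : (s - c * x0) ^+ 2 <= (sg * y) ^+ 2.
  rewrite ler_pXn2r // ?nnegrE; lra.
have h3 : (s - c * x0) ^+ 2 <= (1 - de) / 2 * (1 - x0 ^+ 2).
  apply: (le_trans h2); rewrite exprMn hsg; apply: ler_wpM2l; first lra.
  lra.
set p := c * s.
have hp : p ^+ 2 = (1 + de) * (5 + 3 * de) / 16 by rewrite exprMn hc hs; field.
have p0 : 0 <= p by apply: mulr_ge0.
have hsp : (s - c * x0) ^+ 2 = s ^+ 2 - 2 * p * x0 + c ^+ 2 * x0 ^+ 2.
  by rewrite /p; ring.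
clearbody p.
have hq : x0 ^+ 2 - 2 * p * x0 + (1 + 7 * de) / 8 <= 0.
  move: h3; rewrite hsp hs hc => h3; nra.
have pde : de < p.
  have : de ^+ 2 < p ^+ 2.
    rewrite hp.
    have : 0 < (1 - de) * (5 + 13 * de) by apply: mulr_gt0; lra.
    nra.
  by rewrite ltr_pXn2r // ?nnegrE //; lra.
have E : (de ^+ 2 + (1 + 7 * de) / 8) ^+ 2 - (2 * p * de) ^+ 2
      = (de - 1) ^+ 2 * (16 * de ^+ 2 + 16 * de + 1) / 64.
  by rewrite !exprMn hp; field.
have HH : 0 <= (de - 1) ^+ 2 * (16 * de ^+ 2 + 16 * de + 1) / 64.
  apply: divr_ge0; last lra.
  apply: mulr_ge0; first exact: sqr_ge0.
  nra.
have H3 : (2 * p * de) ^+ 2 <= (de ^+ 2 + (1 + 7 * de) / 8) ^+ 2.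
  by rewrite -subr_ge0 E.
have qd : 2 * p * de <= de ^+ 2 + (1 + 7 * de) / 8.
  have hl : 0 <= 2 * p * de by nra.
  have hr : 0 <= de ^+ 2 + (1 + 7 * de) / 8 by nra.
  by move: H3; rewrite ler_pXn2r // ?nnegrE.
have : 0 < (de - x0) * (2 * p - x0 - de) by apply: mulr_gt0; lra.
nra.
Qed.

End G.
Arguments geo_disj {R de c s x0 y b}.
Arguments geo_cont {R de c sg s x0 y}.

Lemma final_arith (R : realFieldType) (de a i N : R) : 0 < de < 1 -> 0 < a -> 0 <= N -> 0 <= i ->
  3 * (1 - de) / 16 * a <= (N + 1) * i ->
  (3 * (N + 2))^-1 * (3 / 4 - de / 2 - de ^+ 2 / 4) ^+ 3 <= i / a.
Proof.
move=> /andP [d0 d1] a0 N0 i0 h.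
rewrite ler_pdivlMr //.
set f := 3 / 4 - de / 2 - de ^+ 2 / 4.
have f0 : 0 <= f by rewrite /f; nra.
have f1 : f <= 1 - de by rewrite /f; nra.
have f2 : f <= 3 / 4 by rewrite /f; nra.
have h1 : f ^+ 3 <= 9 * (1 - de) / 16.
  have : f ^+ 2 <= 9 / 16.
    rewrite expr2; have -> : (9 / 16 : R) = 3 / 4 * (3 / 4) by field.
    by apply: ler_pM.
  move=> hf2; rewrite exprSr.
  have : f ^+ 2 * f <= 9 / 16 * (1 - de).
    by apply: ler_pM => //; apply: exprn_ge0.
  lra.
have Np : 0 < 3 * (N + 2) by lra.
set t := (3 * (N + 2))^-1.
have t0 : 0 < t by rewrite /t invr_gt0.
have h2 : t * f ^+ 3 * a <= t * (9 * (1 - de) / 16) * a.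
  by rewrite ler_pM2r // ler_pM2l.
have h3 : t * (9 * (1 - de) / 16) * a = 3 * (1 - de) * a / (16 * (N + 2)).
  by rewrite /t; field; lra.
have h4 : 3 * (1 - de) * a / (16 * (N + 2)) <= i.
  rewrite ler_pdivrMr; last lra.
  nra.
lra.
Qed.

Lemma grid_ineq (R : realType) (de t E : R) : 0 < de < 1 ->
  - ((1 - de) / 2) <= t -> 0 <= E -> E <= ((1 - de) / 2) ^+ 2 ->
  0 < 1 + 2 * t + E /\ de * Num.sqrt (1 + 2 * t + E) <= 1 + t.
Proof.
move=> /andP [d0 d1] ht E0 hE.
have V0 : 0 < 1 + 2 * t + E by lra.
split => //.
have t1 : 0 <= 1 + t by lra.
have sq0 : 0 <= Num.sqrt (1 + 2 * t + E) := sqrtr_ge0 _.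
rewrite -(ler_pXn2r (n := 2)) ?nnegrE //; last by apply: mulr_ge0 => //; lra.
rewrite exprMn sqr_sqrtr; last lra.
have h1 : (1 - (1 - de) / 2) ^+ 2 <= (1 + t) ^+ 2.
  rewrite ler_pXn2r ?nnegrE //; lra.
have h2 : (1 + t) ^+ 2 - de ^+ 2 * (1 + 2 * t + E) =
   (1 - de ^+ 2) * (1 + t) ^+ 2 + de ^+ 2 * t ^+ 2 - de ^+ 2 * E by ring.
have h3 : 0 <= de ^+ 2 * t ^+ 2 by apply: mulr_ge0; apply: sqr_ge0.
have h4 : de ^+ 2 * E <= E.
  rewrite -[leRHS]mul1r; apply: ler_wpM2r => //; nra.
have h5 : (1 - de) * (1 / 4) <= (1 - de ^+ 2) * (1 + t) ^+ 2.
  apply: ler_pM; try lra.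
    nra.
  by apply: le_trans h1; nra.
rewrite -subr_ge0 h2.
nra.
Qed.

Section S.
Variable R : realType.
Variable n : nat.
Local Notation d := n.+2.
Local Notation T := (d.-tuple R).

Lemma tmapE (Q : 'M[R]_d) (x : T) k :
  tnth (tmap Q x) k = \sum_i tnth x i * Q i k.
Proof.
rewrite /tmap tnth_mktuple !mxE; apply: eq_bigr => i _; by rewrite mxE.
Qed.

Lemma mtnth (i : 'I_d) : measurable_fun setT (fun x : T => tnth x i).
Proof. exact: measurable_tnth. Qed.

Definition dot (x : T) (u : 'rV[R]_d) : R := \sum_i tnth x i * u 0 i.

Lemma mdot u : measurable_fun setT (fun x => dot x u).
Proof.
apply: measurable_sum => i; apply: measurable_funM; first exact: mtnth.
exact: measurable_cst.
Qed.

Lemma mtmap (Q : 'M[R]_d) : measurable_fun setT (tmap Q).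
Proof.
apply/(measurable_fun_tnthP (tmap Q)) => k.
rewrite (_ : _ \o _ = fun x => \sum_i tnth x i * Q i k); last first.
  by apply/funext => x /=; rewrite tmapE.
apply: measurable_sum => i; apply: measurable_funM; first exact: mtnth.
exact: measurable_cst.
Qed.

Lemma mset_ge (f : T -> R) a : measurable_fun setT f ->
  measurable [set x | a <= f x].
Proof.
move=> mf; have := mf measurableT `[a, +oo[%classic (measurable_itv _).
rewrite setTI; congr measurable; apply/seteqP; split => x /=;
  by rewrite in_itv /= andbT.
Qed.

Lemma mset_lt (f : T -> R) a : measurable_fun setT f ->
  measurable [set x | f x < a].
Proof.
move=> mf; have := mf measurableT `]-oo, a[%classic (measurable_itv _).
rewrite setTI; congr measurable; apply/seteqP; split => x /=;
  by rewrite in_itv /=.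
Qed.

Lemma mS : measurable (@unit_sphere R d).
Proof.
have mf : measurable_fun setT (fun x : T => \sum_(i < d) (tnth x i) ^+ 2).
  by apply: measurable_sum => i; apply: measurable_funX; exact: mtnth.
have := mf measurableT [set 1] (measurable_set1 1).
by rewrite setTI.
Qed.

Lemma householder (u : 'rV[R]_d) : \sum_i u 0 i ^+ 2 = 1 ->
  exists Q : 'M[R]_d, Q *m Q^T = 1%:M /\ forall i, Q i ord0 = u 0 i.
Proof.
move=> hu.
case: (eqVneq u (delta_mx 0 ord0)) => [->|une].
  exists 1%:M; split; first by rewrite trmx1 mulmx1.
  by move=> i; rewrite !mxE eqxx /= eq_sym; case: (i == ord0).
set w := delta_mx 0 ord0 - u.
set a := \sum_i w 0 i ^+ 2.
have wE i : w 0 i = (i == ord0)%:R - u 0 i by rewrite !mxE eqxx.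
have ha : a = 2 - 2 * u 0 ord0.
  rewrite /a (bigD1 ord0) //= wE eqxx.
  rewrite (eq_bigr (fun i => u 0 i ^+ 2)); last first.
    by move=> i /negbTE Hi; rewrite wE Hi sub0r sqrrN.
  move: hu; rewrite (bigD1 ord0) //= => hu.
  have -> : \sum_(i < d | i != ord0) u 0 i ^+ 2 = 1 - u 0 ord0 ^+ 2.
    by rewrite -hu addrC addrK.
  by rewrite /=; ring.
have a0 : 0 <= a by apply: sumr_ge0 => i _; exact: sqr_ge0.
have apos : 0 < a.
  rewrite lt_def a0 andbT; apply/negP => /eqP Ha.
  have := psumr_eq0P (fun i _ => sqr_ge0 (w 0 i)) Ha => h.
  move/negP: une; apply; apply/eqP; apply/matrixP => i j.
  rewrite (ord1 i).
  have := h j isT; move/eqP; rewrite sqrf_eq0 !mxE subr_eq0 => /eqP <-.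
  by [].
clearbody w.
pose W := w^T *m w.
pose k := 2 / a.
have WW : W *m W = a *: W.
  rewrite /W mulmxA -(mulmxA w^T) (mx11_scalar (w *m w^T)).
  have -> : (w *m w^T) 0 0 = a.
    by rewrite mxE /a; apply: eq_bigr => i _; rewrite [w^T _ _]mxE expr2.
  by rewrite mul_mx_scalar -scalemxAl.
have WT : W^T = W by rewrite /W trmx_mul trmxK.
exists (1%:M - k *: W); split.
  rewrite [(_ - _)^T]linearB /= [(_ *: _)^T]linearZ /= trmx1 WT.
  rewrite mulmxBr mulmx1 mulmxBl mul1mx -scalemxAr -scalemxAl WW !scalerA.
  have -> : k * k * a = k + k by rewrite /k; field; rewrite gt_eqF.
  by rewrite scalerDl opprB addrK subrK.
move=> i.
have -> : (1%:M - k *: W) i ord0 = (i == ord0)%:R - k * (w 0 i * w 0 ord0).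
  by rewrite !mxE big_ord1 !mxE.
rewrite !wE eqxx /k ha.
have h2 : 2 - 2 * u 0 ord0 != 0 by rewrite -ha gt_eqF.
have -> : true%:R = 1 :> R by []. move: ((i == ord0)%:R) => b. field.
by [].
Qed.

Variable P : probability T R.
Hypothesis HP : is_uniform_sphere P.

Lemma integral_inv (Q : 'M[R]_d) (f : T -> \bar R) : Q *m Q^T = 1%:M ->
  measurable_fun setT f -> (forall x, 0 <= f x)%E ->
  (\int[P]_x f x = \int[P]_x f (tmap Q x))%E.
Proof.
move=> HQ mf f0.
rewrite (_ : (\int[P]_x f (tmap Q x) = \int[P]_(x in tmap Q @^-1` setT) (f \o tmap Q) x)%E); last by rewrite preimage_setT.
rewrite -(@ge0_integral_pushforward _ _ _ _ R (tmap Q) (mtmap Q) P setT f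
  measurableT mf (fun y _ => f0 y)).
apply: eq_measure_integral; first exact: mtmap.
move=> ? A mA _.
rewrite /= /pushforward.
by rewrite (proj2 HP Q HQ A mA).
Qed.



Lemma cap_eq (u : 'rV[R]_d) a : \sum_i u 0 i ^+ 2 = 1 ->
  P [set x | a <= dot x u] = P [set x | a <= tnth x ord0].
Proof.
move=> hu; have [Q [HQ HQ0]] := householder u hu.
rewrite -(proj2 HP Q HQ _ (mset_ge _ a (mtnth ord0))).
have E x : tnth (tmap Q x) ord0 = dot x u.
  by rewrite tmapE /dot; apply: eq_bigr => i _; rewrite HQ0.
by congr (P _); apply/seteqP; split => x /=; rewrite E.
Qed.

Local Notation S := (@unit_sphere R d).

Lemma PSc : P (~` S) = 0%E.
Proof. rewrite probability_setC; last exact: mS. have HS := proj1 HP. rewrite HS. by rewrite subee. Qed.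

Lemma PIS (X : set T) : measurable X -> P X = P (X `&` S).
Proof.
move=> mX.
have H0 : P (X `\` S) = 0%E.
  apply/eqP; rewrite eq_le measure_ge0 andbT -PSc.
  apply: le_measure; rewrite ?inE.
  - exact: measurableD mX mS.
  - by apply: measurableC; exact: mS.
  - by move=> x [].
rewrite (measureDI P mX mS) [X in (X + _)%E](_ : _ = 0%E) ?add0e //.
Qed.

Lemma Pfin (X : set T) : measurable X -> P X = (fine (P X))%:E.
Proof. by move=> mX; rewrite fineK // (fin_num_measure P X mX). Qed.

Definition i1 : 'I_d := lift ord0 ord0.

Lemma sum2 (F : 'I_d -> R) : (forall i : 'I_d, (1 < i)%N -> F i = 0) ->
  \sum_i F i = F ord0 + F i1.
Proof.
move=> H; rewrite !big_ord_recl big1 ?addr0 // => i _; exact: H.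
Qed.

Lemma sq01 x : S x -> tnth x ord0 ^+ 2 + tnth x i1 ^+ 2 <= 1.
Proof.
rewrite /unit_sphere /= !big_ord_recl => H.
have : 0 <= \sum_(i < n) tnth x (lift ord0 (lift ord0 i)) ^+ 2.
  by apply: sumr_ge0 => i _; exact: sqr_ge0.
rewrite /i1; lra.
Qed.

Variable de : R.
Hypothesis hde : 0 < de < 1.
Definition cc := Num.sqrt ((1 + de) / 2).
Definition sg := Num.sqrt ((1 - de) / 2).
Definition ss := Num.sqrt ((5 + 3 * de) / 8).

Lemma hcc : cc ^+ 2 = (1 + de) / 2.
Proof. by rewrite sqr_sqrtr //; case/andP: hde => ? ?; lra. Qed.
Lemma hsg : sg ^+ 2 = (1 - de) / 2.
Proof. by rewrite sqr_sqrtr //; case/andP: hde => ? ?; lra. Qed.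
Lemma hss : ss ^+ 2 = (5 + 3 * de) / 8.
Proof. by rewrite sqr_sqrtr //; case/andP: hde => ? ?; lra. Qed.

Definition uvec (b : R) : 'rV[R]_d :=
  \row_(i < d) (if i == ord0 then cc else if i == i1 then b else 0).

Lemma dot_uvec x b : dot x (uvec b) = cc * tnth x ord0 + b * tnth x i1.
Proof.
rewrite /dot sum2; last first.
  move=> i hi; rewrite mxE.
  have -> : (i == ord0) = false by apply/negbTE; rewrite -(inj_eq val_inj) /=; case: (nat_of_ord i) hi.
  have -> : (i == i1) = false.
    by apply/negbTE; rewrite -(inj_eq val_inj) /=; case: (nat_of_ord i) hi => // -[].
  by rewrite mulr0.
by rewrite !mxE /= mulrC [tnth x i1 * _]mulrC.
Qed.

Lemma unit_uvec b : b ^+ 2 = (1 - de) / 2 -> \sum_i (uvec b) 0 i ^+ 2 = 1.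
Proof.
move=> hb; rewrite sum2; last first.
  move=> i hi; rewrite mxE.
  have -> : (i == ord0) = false by apply/negbTE; rewrite -(inj_eq val_inj) /=; case: (nat_of_ord i) hi.
  have -> : (i == i1) = false.
    by apply/negbTE; rewrite -(inj_eq val_inj) /=; case: (nat_of_ord i) hi => // -[].
  by rewrite expr2 mulr0.
rewrite !mxE eqxx /= hb hcc; lra.
Qed.

Definition Aset := [set x : T | de <= tnth x ord0].
Definition Cs := [set x : T | ss <= tnth x ord0].

Lemma mAset : measurable Aset. Proof. exact: mset_ge _ _ (mtnth ord0). Qed.
Lemma mCs : measurable Cs. Proof. exact: mset_ge _ _ (mtnth ord0). Qed.

Lemma halving : (P Cs + P Cs <= P Aset)%E.
Proof.
have [d0 d1] := andP hde.
have c0 : 0 <= cc := sqrtr_ge0 _.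
have sg0 : 0 <= sg := sqrtr_ge0 _.
have s0 : 0 <= ss := sqrtr_ge0 _.
have hsgN : (- sg) ^+ 2 = (1 - de) / 2 by rewrite sqrrN hsg.
pose Cp := [set x : T | ss <= dot x (uvec sg)].
pose Cm := [set x : T | ss <= dot x (uvec (- sg))].
have mCp : measurable Cp by apply: mset_ge; exact: mdot.
have mCm : measurable Cm by apply: mset_ge; exact: mdot.
rewrite /Cs -{1}(cap_eq (uvec sg) ss (unit_uvec sg hsg)).
rewrite -(cap_eq (uvec (- sg)) ss (unit_uvec (- sg) hsgN)) -/Cp -/Cm.
rewrite (PIS _ mCp) (PIS _ mCm) -measureU; first last.
- apply/seteqP; split => // x [[h1 hS1] [h2 _]].
  rewrite /Cp /= !dot_uvec in h1 h2.
  exfalso; apply: (geo_disj hde hcc hss c0 s0 (sq01 _ hS1) h1).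
  by move: h2; rewrite /Cm /= dot_uvec mulNr.
- exact: measurableI mCm mS.
- exact: measurableI mCp mS.
apply: le_measure; rewrite ?inE.
- by apply: measurableU; apply: measurableI => //; exact: mS.
- exact: mAset.
move=> x [[h hS]|[h hS]]; rewrite /Aset /=; rewrite /Cp /Cm /= dot_uvec in h.
  exact: (geo_cont hde hcc hsg hss c0 sg0 s0 (sq01 _ hS) h).
apply: (geo_cont hde hcc hsg hss c0 sg0 s0 _ (y := - tnth x i1)).
  by rewrite sqrrN; exact: sq01 _ hS.
by rewrite mulrN -mulNr.
Qed.

Definition fj (j : 'I_d) : T -> \bar R := fun x => (tnth x j ^+ 2)%:E.

Lemma mfj j : measurable_fun setT (fj j).
Proof. by apply/measurable_EFinP; apply: measurable_funX; exact: mtnth. Qed.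

Lemma fj_ge0 j x : (0 <= fj j x)%E.
Proof. by rewrite lee_fin sqr_ge0. Qed.

Lemma tmap_perm (s : 'S_d) (x : T) (k : 'I_d) :
  tnth (tmap (perm_mx s : 'M[R]_d) x) k = tnth x (s^-1 k)%g.
Proof.
rewrite tmapE (bigD1 (s^-1 k)%g) //= big1 ?addr0.
  by rewrite !mxE permKV eqxx mulr1.
move=> i hi; rewrite !mxE.
have -> : (s i == k) = false.
  by apply/negbTE; apply: contra hi => /eqP <-; rewrite permK.
by rewrite mulr0.
Qed.

Lemma int_swap j : j != ord0 ->
  (\int[P]_(x in Aset) fj j x = \int[P]_(x in Aset) fj i1 x)%E.
Proof.
move=> j0.
pose s := tperm i1 j.
pose Q : 'M[R]_d := perm_mx s.
have HQ : Q *m Q^T = 1%:M.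
  by rewrite /Q tr_perm_mx -perm_mxM mulgV perm_mx1.
have m1 : measurable_fun setT (fj j \_ Aset).
  by apply/(measurable_restrictT _ mAset); apply: measurable_funTS; exact: mfj.
have p1 : forall x, (0 <= (fj j \_ Aset) x)%E.
  by apply: erestrict_ge0 => x _; exact: fj_ge0.
rewrite integral_mkcond [RHS]integral_mkcond (integral_inv Q _ HQ m1 p1).
apply: eq_integral => x _.
have sV : (s^-1 = s)%g by rewrite /s tpermV.
have e0 : tnth (tmap Q x) ord0 = tnth x ord0.
  rewrite tmap_perm sV /s tpermD //.
have ej : tnth (tmap Q x) j = tnth x i1.
  by rewrite tmap_perm sV /s tpermR.
rewrite /patch /fj ej.
suff -> : (tmap Q x \in Aset) = (x \in Aset) by [].
by apply/idP/idP => /set_mem; rewrite /Aset /= ?e0 => h; apply/mem_set; rewrite /= ?e0.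
Qed.
Lemma aeS (Qp : T -> Prop) : (forall x, S x -> Qp x) -> {ae P, forall x, Qp x}.
Proof.
move=> H; exists (~` S); split.
- by apply: measurableC; exact: mS.
- exact: PSc.
- by move=> x /= nQ Sx; apply: nQ; exact: H.
Qed.

Definition I1 := (\int[P]_(x in Aset) fj i1 x)%E.

Lemma I1_ge0 : (0 <= I1)%E.
Proof. by apply: integral_ge0 => x _; exact: fj_ge0. Qed.

Lemma I1_le : (I1 <= P Aset)%E.
Proof.
apply: (@le_trans _ _ (\int[P]_(x in Aset) (cst 1%E) x)%E); last first.
  by rewrite integral_cst ?mul1e //; exact: mAset.
apply: ae_ge0_le_integral.
- exact: mAset.
- by move=> x _; exact: fj_ge0.
- by apply: measurable_funTS; exact: mfj.
- by move=> x _; rewrite lee_fin.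
- exact: measurable_cst.
apply: aeS => x Sx _; rewrite /fj lee_fin.
by have := sq01 _ Sx; have := sqr_ge0 (tnth x ord0); lra.
Qed.

Definition Bset := [set x : T | tnth x ord0 < ss].
Lemma mBset : measurable Bset. Proof. exact: mset_lt _ _ (mtnth ord0). Qed.

Lemma sum_bound :
  ((1 - ss ^+ 2)%:E * P (Aset `&` Bset) <= \sum_(i < n.+1) I1)%E.
Proof.
have [d0 d1] := andP hde.
have s0 : 0 <= ss := sqrtr_ge0 _.
have mAB : measurable (Aset `&` Bset) by apply: measurableI; [exact: mAset|exact: mBset].
have -> : (\sum_(i < n.+1) I1 =
    \sum_(i < n.+1) \int[P]_(x in Aset) fj (lift ord0 i) x)%E.
  by apply: eq_bigr => i _; rewrite /I1 int_swap // neq_lift.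
rewrite -(@ge0_integral_sum _ _ _ P Aset mAset _ (fun i => fj (lift ord0 i))
  (fun i => measurable_funTS (mfj _)) (fun i x _ => fj_ge0 _ _)).
apply: (@le_trans _ _ (\int[P]_(x in Aset `&` Bset)
   (\sum_(i < n.+1) fj (lift ord0 i) x))%E); last first.
  apply: ge0_subset_integral => //.
  - exact: mAset.
  - apply: emeasurable_sum => i; apply: measurable_funTS; exact: mfj.
  - by move=> x _; apply: sume_ge0 => i _; exact: fj_ge0.
apply: (@le_trans _ _ (\int[P]_(x in Aset `&` Bset) (cst (1 - ss ^+ 2)%:E) x)%E).
  by rewrite integral_cst.
apply: ae_ge0_le_integral => //.
- move=> x _; rewrite lee_fin subr_ge0.
  by have : ss ^+ 2 <= 1 by rewrite hss; lra.
- by move=> x _; apply: sume_ge0 => i _; exact: fj_ge0.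
- apply: emeasurable_sum => i; apply: measurable_funTS; exact: mfj.
apply: aeS => x Sx [hA hB].
rewrite /fj sumEFin lee_fin.
move: Sx; rewrite /unit_sphere /= big_ord_recl => Sx.
have -> : \sum_(i < n.+1) tnth x (lift ord0 i) ^+ 2 = 1 - tnth x ord0 ^+ 2.
  by lra.
rewrite /Aset /Bset /= in hA hB.
have : tnth x ord0 ^+ 2 <= ss ^+ 2.
  by rewrite ler_pXn2r ?nnegrE //; lra.
lra.
Qed.

Lemma c2E : c2 P de = fine I1 / fine (P Aset).
Proof.
have EA : [set x : T | de <= nth 0 x 0] = Aset.
  by apply/seteqP; split => x; rewrite /Aset /= (tnth_nth 0).
have Ef : (fun x : T => ((nth 0 x 1) ^+ 2)%:E) = fj i1.
  by apply/funext => x; rewrite /fj (tnth_nth 0).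
rewrite /c2 /I1 EA Ef.
by [].
Qed.

Lemma PAB : fine (P Aset) / 2 <= fine (P (Aset `&` Bset)).
Proof.
have [d0 d1] := andP hde.
have mAB : measurable (Aset `&` Bset) by apply: measurableI; [exact: mAset|exact: mBset].
have E2 : Aset `\` Bset = Cs.
  apply/seteqP; split => x; rewrite /Aset /Bset /Cs /=.
    by move=> [_ h]; rewrite leNgt; apply/negP.
  move=> h; split; last by apply/negP; rewrite -leNgt.
  apply: le_trans h.
  have s0 : 0 <= ss := sqrtr_ge0 _.
  have : de ^+ 2 <= ss ^+ 2 by rewrite hss; nra.
  by rewrite ler_pXn2r ?nnegrE //; lra.
have E1 : P Aset = (P Cs + P (Aset `&` Bset))%E.
  by rewrite -E2 {1}(measureDI P mAset mBset).
have H := halving.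
rewrite (Pfin _ mAset) (Pfin _ mCs) (Pfin _ mAB) in E1 H.
rewrite -EFinD in E1; rewrite -EFinD lee_fin in H.
have E1b : fine (P Aset) = fine (P Cs) + fine (P (Aset `&` Bset)) by case: E1.
lra.
Qed.


Definition eta := (1 - de) / 2.
Definition m : nat := (Num.Def.trunc (d%:R / eta)).+1.
Definition G := {ffun 'I_d -> 'I_((2 * m).+1)}.
Definition vg (g : G) : 'rV[R]_d := \row_i (((g i : nat)%:R - m%:R) / m%:R).
Definition vv g := \sum_i vg g 0 i ^+ 2.
Definition Fg g : set T :=
  if 0 < vv g then [set x | de * Num.sqrt (vv g) <= dot x (vg g)] else set0.

Lemma eta_pos : 0 < eta.
Proof. by rewrite /eta; case/andP: hde => ? ?; lra. Qed.

Lemma m_pos : 0 < m%:R :> R.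
Proof. by rewrite ltr0n. Qed.

Lemma m_big : d%:R <= m%:R ^+ 2 * eta ^+ 2 :> R.
Proof.
have e0 := eta_pos.
have h0 : 0 <= d%:R / eta :> R by apply: divr_ge0 => //; exact: ltW.
have := truncn_itv h0 => /andP [_ h1].
have h2 : d%:R < m%:R * eta :> R by rewrite -ltr_pdivrMr.
have d1 : 1 <= d%:R :> R by rewrite ler1n.
rewrite -exprMn.
have : 0 <= d%:R :> R by lra.
nra.
Qed.

Lemma dotZ x c (v : 'rV[R]_d) : dot x (c *: v) = c * dot x v.
Proof.
rewrite /dot mulr_sumr; apply: eq_bigr => i _; rewrite mxE; ring.
Qed.

Lemma mFg g : measurable (Fg g).
Proof.
rewrite /Fg; case: ifP => _; last exact: measurable0.
apply: mset_ge; exact: mdot.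
Qed.

Lemma PFg g : (P (Fg g) <= P Aset)%E.
Proof.
rewrite /Fg; case: ifPn => hv; last by rewrite measure0 measure_ge0.
set r := Num.sqrt (vv g).
have r0 : 0 < r by rewrite /r sqrtr_gt0.
pose u := r^-1 *: vg g.
have hu : \sum_i u 0 i ^+ 2 = 1.
  rewrite (eq_bigr (fun i => r^-2 * vg g 0 i ^+ 2)); last first.
    by move=> i _; rewrite mxE exprMn exprVn.
  rewrite -mulr_sumr -/(vv g) -[vv g](@sqr_sqrtr _ (vv g)) -/r ?mulVf //.
    by rewrite expf_neq0 // gt_eqF.
  exact: ltW.
suff -> : [set x | de * r <= dot x (vg g)] = [set x | de <= dot x u].
  by rewrite (cap_eq u de hu).
apply/seteqP; split => x /=; by rewrite /u dotZ [r^-1 * _]mulrC ler_pdivlMr.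
Qed.


Lemma coord_le1 x i : S x -> tnth x i ^+ 2 <= 1.
Proof.
rewrite /unit_sphere /= (bigD1 i) //= => H.
have : 0 <= \sum_(j < d | j != i) tnth x j ^+ 2.
  by apply: sumr_ge0 => j _; exact: sqr_ge0.
lra.
Qed.

Lemma cover x : S x -> exists g, Fg g x.
Proof.
move=> Sx.
have [d0 d1] := andP hde.
have mp := m_pos.
have ep := eta_pos.
have xb i : -1 <= tnth x i <= 1.
  have := coord_le1 x i Sx; move=> h; apply/andP; split; nra.
pose z i := m%:R * (tnth x i + 1).
have z0 i : 0 <= z i.
  by rewrite /z; apply: mulr_ge0; [exact: ltW|]; case/andP: (xb i) => ? ?; lra.
pose j i := Num.Def.trunc (z i).
have hj i : (j i)%:R <= z i < (j i).+1%:R := truncn_itv (z0 i).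
have jle i : (j i < (2 * m).+1)%N.
  rewrite ltnS -(ler_nat R) natrM.
  case/andP: (hj i) => h _; apply: (le_trans h).
  rewrite /z; case/andP: (xb i) => _ h1.
  have : m%:R * (tnth x i + 1) <= m%:R * 2 by rewrite ler_pM2l //; lra.
  lra.
pose g : G := [ffun i => inord (j i)].
have gv i : (g i : nat) = j i by rewrite ffunE inordK.
exists g.
pose e i := vg g 0 i - tnth x i.
have ee i : m%:R * e i = (j i)%:R - z i.
  rewrite /e mxE gv /z; field; exact: lt0r_neq0.
have me i : e i ^+ 2 * m%:R ^+ 2 <= 1.
  rewrite -exprMn mulrC ee; case/andP: (hj i) => h1 h2.
  have : (j i).+1%:R = (j i)%:R + 1 :> R by rewrite -addn1 natrD.
  nra.
pose t := \sum_i tnth x i * e i.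
pose E := \sum_i e i ^+ 2.
have Sx1 : \sum_i tnth x i ^+ 2 = 1 := Sx.
have dotE : dot x (vg g) = 1 + t.
  rewrite /dot -Sx1 /t -big_split /=; apply: eq_bigr => i _.
  by rewrite /e; ring.
have vvE : vv g = 1 + 2 * t + E.
  have -> : vv g = \sum_i (tnth x i ^+ 2 + 2 * (tnth x i * e i) + e i ^+ 2).
    by rewrite /vv; apply: eq_bigr => i _; rewrite /e; ring.
  by rewrite !big_split /= -mulr_sumr Sx1.
have E0 : 0 <= E by apply: sumr_ge0 => i _; exact: sqr_ge0.
have hE : E <= eta ^+ 2.
  have h1 : E * m%:R ^+ 2 <= d%:R.
    rewrite /E mulr_suml.
    apply: (@le_trans _ _ (\sum_(i < d) (1 : R))).
      by apply: ler_sum => i _; exact: me.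
    by rewrite sumr_const card_ord.
  have h2 := m_big.
  have h3 : 0 < m%:R ^+ 2 :> R by apply: exprn_gt0.
  nra.
have ht : - eta <= t.
  have h1 : \sum_i (- 2 * (tnth x i * e i)) <=
            \sum_i (eta * tnth x i ^+ 2 + e i ^+ 2 / eta).
    apply: ler_sum => i _.
    have : 0 <= (eta * tnth x i + e i) ^+ 2 / eta.
      by apply: divr_ge0; [exact: sqr_ge0| exact: ltW].
    have -> : (eta * tnth x i + e i) ^+ 2 / eta =
      eta * tnth x i ^+ 2 + e i ^+ 2 / eta + 2 * (tnth x i * e i).
      by field; exact: lt0r_neq0.
    lra.
  rewrite -mulr_sumr big_split /= -mulr_sumr -mulr_suml Sx1 -/t -/E in h1.
  have h2 : E / eta <= eta.
    by rewrite ler_pdivrMr // -expr2.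
  lra.
have [V0 Hs] := grid_ineq _ _ _ _ hde ht E0 hE.
rewrite /Fg vvE V0 /= dotE.
exact: Hs.
Qed.
Lemma in_big (s : seq G) g x : g \in s -> Fg g x ->
  (\big[setU/set0]_(h <- s) Fg h) x.
Proof.
elim: s => // h s IH; rewrite in_cons big_cons => /orP [/eqP <-|gs] Fx.
  by left.
by right; apply: IH.
Qed.

Lemma mbig (s : seq G) : measurable (\big[setU/set0]_(h <- s) Fg h).
Proof.
elim: s => [|h s IH]; first by rewrite big_nil; exact: measurable0.
by rewrite big_cons; apply: measurableU => //; exact: mFg.
Qed.

Lemma sub_add (s : seq G) :
  (P (\big[setU/set0]_(h <- s) Fg h) <= ((size s)%:R * fine (P Aset))%:E)%E.
Proof.
elim: s => [|h s IH]; first by rewrite big_nil measure0 mul0r.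
rewrite big_cons.
apply: (le_trans (measureU2 P (mFg h) (mbig s))).
have := PFg h; rewrite (Pfin _ mAset) => H.
rewrite (Pfin _ mAset) in H.
apply: (le_trans (leeD H IH)).
have E : ((size s).+1%:R : R) = (size s)%:R + 1 by rewrite -addn1 natrD.
by rewrite -EFinD lee_fin /= E; lra.
Qed.

Lemma PA_pos : (0 < P Aset)%E.
Proof.
have cov : S `<=` \big[setU/set0]_(h <- enum G) Fg h.
  move=> x Sx; have [g Hg] := cover x Sx.
  by apply: (in_big _ g) => //; rewrite mem_enum.
have h1 : (1 <= ((size (enum G))%:R * fine (P Aset))%:E)%E.
  rewrite -(proj1 HP); apply: le_trans (sub_add _).
  apply: le_measure; rewrite ?inE //; [exact: mS| exact: mbig].
rewrite lee_fin in h1.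
have h0 : 0 <= fine (P Aset) by apply: fine_ge0; exact: measure_ge0.
rewrite (Pfin _ mAset) lte_fin lt_def h0 andbT.
apply/negP => /eqP h; rewrite h mulr0 in h1; lra.
Qed.

Lemma c2_bound :
  (3 * d%:R)^-1 * (3 / 4 - de / 2 - de ^+ 2 / 4) ^+ 3 <= c2 P de.
Proof.
have [d0 d1] := andP hde.
have mAB : measurable (Aset `&` Bset) by apply: measurableI; [exact: mAset|exact: mBset].
have pos := PA_pos.
rewrite (Pfin _ mAset) lte_fin in pos.
have I1fin : I1 \is a fin_num.
  rewrite ge0_fin_numE ?I1_ge0 //; apply: (le_lt_trans I1_le).
  by rewrite (Pfin _ mAset) ltry.
have I1E : I1 = (fine I1)%:E by rewrite fineK.
have hi : 0 <= fine I1 by apply: fine_ge0; exact: I1_ge0.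
have hs := sum_bound.
rewrite I1E sumEFin sumr_const card_ord (Pfin _ mAB) -EFinM lee_fin hss in hs.
rewrite -mulr_natl in hs.
have hab := PAB.
rewrite c2E.
have -> : (n.+2)%:R = n%:R + 2 :> R by rewrite -addn2 natrD.
apply: final_arith => //.
have -> : (n%:R + 1 : R) = (n.+1)%:R by rewrite -addn1 natrD.
have : 0 <= 1 - (5 + 3 * de) / 8 by lra.
nra.
Qed.

End S.

Theorem lemma6 (R : realType) (d : nat) (P : probability (d.-tuple R) R)
  (delta : R) :
  (2 <= d)%N -> is_uniform_sphere P -> 0 < delta < 1 ->
  (3 * d%:R)^-1 * (3 / 4 - delta / 2 - delta ^+ 2 / 4) ^+ 3 <= c2 P delta.
Proof.
case: d P => [|[|n]] P // _ HP hde.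
exact: (@c2_bound R n P HP delta hde).
Qed.
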